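(* Let $L\subset\mathbb{Z}^m$ be a non-zero lattice with $L\cap\mathbb{N}^m=\{\mathbf 0\}$ and $\mathrm{Sat}(L)=\ker_{\mathbb{Z}}(\mathcal{A})$. If $\mathrm{rad}(I_L)=\mathrm{rad}(F_1,\ldots,F_s)$ for some $\mathcal{A}$-homogeneous polynomials $F_1,\ldots,F_s\in I_L$, then $\bigcup_{i=1}^s\Gamma_L(F_i)$ is a spanning subcomplex of $\Gamma_L$, and each $\Gamma_L(F_i)$ is a simplex of $\Gamma_L$.
   Context: $K$ is a field, $\mathbf x^{\mathbf u}=x_1^{u_1}\cdots x_m^{u_m}$, $\mathbf u_\pm$ the positive/negative parts of $\mathbf u$, $I_L=(\mathbf x^{\mathbf u_+}-\mathbf x^{\mathbf u_-}:\mathbf u\in L)\subset K[x_1,\ldots,x_m]$, $\mathrm{Sat}(L)=\{\mathbf u:d\mathbf u\in L\text{ for some nonzero }d\in\mathbb{Z}\}$, $\mathcal{A}=\{\mathbf a_1,\ldots,\mathbf a_m\}\subset\mathbb{Z}^n$, $\ker_{\mathbb{Z}}(\mathcal{A})=\{\mathbf q:\sum q_i\mathbf a_i=0\}$. The $\mathcal{A}$-degree of $\mathbf x^{\mathbf u}$ is $\sum u_i\mathbf a_i$; a polynomial is $\mathcal{A}$-homogeneous if all its monomials have equal $\mathcal{A}$-degree. A monomial $M$ is indispensable of $I_L$ if every system of binomial generators contains a binomial having $M$ as a monomial. $\mathcal{T}_{\min}$: inclusion-minimal supports of indispensable monomials ($\mathrm{supp}(\mathbf x^{\mathbf w})=\{i:w_i\ne0\}$).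 $\Gamma_L$: simplicial complex on $\mathcal{T}_{\min}$, with $\{E_1,\ldots,E_k\}$ a face iff there are monomials $M_i$, $\mathrm{supp}(M_i)=E_i$, of equal $\mathcal{A}$-degree. $\Gamma_L(F)$: induced subcomplex on those $E\in\mathcal{T}_{\min}$ equal to the support of some monomial occurring in $F$. Spanning subcomplex: one with the same vertex set as $\Gamma_L$. *)

(* Defs.v *)
From HB Require Import structures.
From mathcomp Require Import all_boot all_order all_algebra.
From mathcomp Require Import mpoly.
Unset Printing Implicit Defensive.
Import Order.TTheory GRing.Theory Num.Theory.
Local Open Scope ring_scope.

Definition is_lattice (m : nat) (L : {ffun 'I_m -> int} -> Prop) : Prop :=
  L 0 /\ (forall u v, L u -> L v -> L (u - v)).

Definition pos_part (m : nat) (u : {ffun 'I_m -> int}) : 'X_{1..m} :=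
  [multinom (`|Num.max (u i) 0|%N) | i < m].
Definition neg_part (m : nat) (u : {ffun 'I_m -> int}) : 'X_{1..m} :=
  [multinom `|Num.max (- u i) 0|%N | i < m].

Definition ideal_gen (K : fieldType) (m : nat) (S : {mpoly K[m]} -> Prop)
  (f : {mpoly K[m]}) : Prop :=
  exists r : seq ({mpoly K[m]} * {mpoly K[m]}),
    (forall p, p \in r -> S p.1) /\ f = \sum_(p <- r) p.2 * p.1.

Definition radical (K : fieldType) (m : nat) (I : {mpoly K[m]} -> Prop)
  (f : {mpoly K[m]}) : Prop := exists k : nat, I (f ^+ k).

Definition lattice_binomial (K : fieldType) (m : nat)
  (L : {ffun 'I_m -> int} -> Prop) (f : {mpoly K[m]}) : Prop :=
  exists u, L u /\ f = 'X_[pos_part m u] - 'X_[neg_part m u].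
Definition I_L (K : fieldType) (m : nat) (L : {ffun 'I_m -> int} -> Prop) :=
  ideal_gen K m (lattice_binomial K m L).

Definition is_binomial (K : fieldType) (m : nat) (f : {mpoly K[m]}) : Prop :=
  exists a b : 'X_{1..m}, a != b /\ f = 'X_[a] - 'X_[b].

Definition binomial_gen_system (K : fieldType) (m : nat)
  (L : {ffun 'I_m -> int} -> Prop) (S : {mpoly K[m]} -> Prop) : Prop :=
  (forall f, S f -> is_binomial K m f) /\
  (forall f, ideal_gen K m S f <-> I_L K m L f).

Definition indispensable (K : fieldType) (m : nat)
  (L : {ffun 'I_m -> int} -> Prop) (M : 'X_{1..m}) : Prop :=
  forall S, binomial_gen_system K m L S -> exists f, S f /\ M \in msupp f.

Definition msupport (m : nat) (M : 'X_{1..m}) : {set 'I_m} :=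
  [set i | M i != 0%N].

Definition Tmin (K : fieldType) (m : nat) (L : {ffun 'I_m -> int} -> Prop)
  (E : {set 'I_m}) : Prop :=
  (exists M, indispensable K m L M /\ msupport m M = E) /\
  ~ (exists M, indispensable K m L M /\ msupport m M \proper E).

(* A-degree of a monomial; A is given by its columns a_i = A i *)
Definition Adeg (m n : nat) (A : 'I_m -> 'I_n -> int) (M : 'X_{1..m})
  : {ffun 'I_n -> int} :=
  [ffun j => \sum_(i < m) (M i)%:Z * A i j].

Definition A_homogeneous (K : fieldType) (m n : nat) (A : 'I_m -> 'I_n -> int)
  (F : {mpoly K[m]}) : Prop :=
  forall M M', M \in msupp F -> M' \in msupp F -> Adeg m n A M = Adeg m n A M'.

Definition Gamma_face (K : fieldType) (m n : nat) (L : {ffun 'I_m -> int} -> Prop)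
  (A : 'I_m -> 'I_n -> int) (sigma : {set {set 'I_m}}) : Prop :=
  (forall E, E \in sigma -> Tmin K m L E) /\
  exists (Mf : {set 'I_m} -> 'X_{1..m}) (d : {ffun 'I_n -> int}),
    forall E, E \in sigma -> msupport m (Mf E) = E /\ Adeg m n A (Mf E) = d.

Definition vertex_of_poly (K : fieldType) (m : nat) (L : {ffun 'I_m -> int} -> Prop)
  (F : {mpoly K[m]}) (E : {set 'I_m}) : Prop :=
  Tmin K m L E /\ exists M, M \in msupp F /\ msupport m M = E.

Definition GammaF_face (K : fieldType) (m n : nat) (L : {ffun 'I_m -> int} -> Prop)
  (A : 'I_m -> 'I_n -> int) (F : {mpoly K[m]}) (sigma : {set {set 'I_m}}) : Prop :=
  Gamma_face K m n L A sigma /\ (forall E, E \in sigma -> vertex_of_poly K m L F E).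

Definition spanning_subcomplex (K : fieldType) (m n : nat)
  (L : {ffun 'I_m -> int} -> Prop) (A : 'I_m -> 'I_n -> int)
  (C : {set {set 'I_m}} -> Prop) : Prop :=
  (forall sigma, C sigma -> Gamma_face K m n L A sigma) /\
  (forall E, Gamma_face K m n L A [set E] -> C [set E]).

Definition is_simplex_of (K : fieldType) (m n : nat)
  (L : {ffun 'I_m -> int} -> Prop) (A : 'I_m -> 'I_n -> int)
  (C : {set {set 'I_m}} -> Prop) : Prop :=
  exists sigma, Gamma_face K m n L A sigma /\
    (forall tau, C tau <-> tau \subset sigma).

(* Main.v *)
Require Import Defs.
From HB Require Import structures.
From mathcomp Require Import all_boot all_order all_algebra.
From mathcomp Require Import mpoly.
From mathcomp Require Import zify.
From Stdlib Require Import Classical ClassicalEpsilon.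
Import Order.TTheory GRing.Theory Num.Theory.
Local Open Scope ring_scope.

Section Helpers.
Context (K : fieldType) (m : nat).

Definition psi (F : {set 'I_m}) (p : {mpoly K[m]}) : {mpoly K[m]} :=
  comp_mpoly [tuple (if i \in F then 'X_i else 0 : {mpoly K[m]}) | i < m] p.

Lemma psiX F (mm : 'X_{1..m}) :
  psi F 'X_[mm] = if msupport m mm \subset F then 'X_[mm] else 0.
Proof.
rewrite /psi comp_mpolyX; case: ifP => h.
  rewrite [RHS]mpolyXE_id; apply: eq_bigr => i _; rewrite tnth_mktuple.
  case: ifP => // iF.
  have : i \notin msupport m mm by apply/negP => /(subsetP h); rewrite iF.
  by rewrite inE negbK => /eqP ->; rewrite !expr0.
have /subsetPn [i ii iF] : ~~ (msupport m mm \subset F) by rewrite h.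
rewrite (bigD1 i) //= tnth_mktuple (negbTE iF) expr0n.
by move: ii; rewrite inE => /negbTE ->; rewrite mul0r.
Qed.

Lemma psiM F (p q : {mpoly K[m]}) : psi F (p * q) = psi F p * psi F q.
Proof. exact: rmorphM. Qed.
Lemma psiXn F (p : {mpoly K[m]}) k : psi F (p ^+ k) = psi F p ^+ k.
Proof. exact: rmorphXn. Qed.
Lemma psi_sum F (r : seq ({mpoly K[m]} * {mpoly K[m]})) f :
  psi F (\sum_(p <- r) f p) = \sum_(p <- r) psi F (f p).
Proof. exact: raddf_sum. Qed.

Lemma psi_supp F p mm : mm \in msupp (psi F p) ->
  mm \in msupp p /\ msupport m mm \subset F.
Proof.
rewrite /psi comp_mpolyEX => /msupp_sum_le /flattenP [s /mapP [x]].
rewrite mem_filter /= => xp -> /msuppZ_le.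
rewrite -/(psi F 'X_[x]) psiX; case: ifP => h; last by rewrite msupp0.
by rewrite msuppX mem_seq1 => /eqP ->.
Qed.


Lemma posE (u : {ffun 'I_m -> int}) i :
  pos_part m u i = if 0 < u i then `|u i|%N else 0%N.
Proof.
by rewrite /pos_part mnmE; case: (leP (u i) 0).
Qed.
Lemma negE (u : {ffun 'I_m -> int}) i :
  neg_part m u i = if u i < 0 then `|u i|%N else 0%N.
Proof.
rewrite /neg_part mnmE -oppr_gt0; case: (leP (- u i) 0) => //.
by rewrite abszN.
Qed.
Lemma posN (u : {ffun 'I_m -> int}) : pos_part m (-u) = neg_part m u.
Proof. by apply/mnmP => i; rewrite posE negE ffunE oppr_gt0 abszN. Qed.
Lemma pos0 : pos_part m 0 = neg_part m 0.
Proof. by apply/mnmP => i; rewrite posE negE ffunE ltxx. Qed.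
Lemma pos_neg_disj (u : {ffun 'I_m -> int}) i :
  pos_part m u i != 0%N -> neg_part m u i = 0%N.
Proof.
rewrite posE negE; case: ifP => // h _.
by rewrite ltNge (ltW h).
Qed.
Lemma pos_zero (u : {ffun 'I_m -> int}) :
  (forall i, pos_part m u i = 0%N) -> forall i, 0 <= - u i.
Proof.
move=> h i; have := h i; rewrite posE oppr_ge0; case: ifP => [_ /eqP|].
  by rewrite absz_eq0 => /eqP ->.
by move/negbT; rewrite -leNgt.
Qed.

Context (L : {ffun 'I_m -> int} -> Prop) (hlat : is_lattice m L)
  (hpos : forall u, L u -> (forall i, 0 <= u i) -> u = 0).

Lemma LN u : L u -> L (- u).
Proof. by case: hlat => h0 hs /(hs _ _ h0); rewrite sub0r. Qed.

Lemma pos_nz u : L u -> u != 0 -> exists i, pos_part m u i != 0%N.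
Proof.
move=> Lu unz; case: (pickP [pred i | pos_part m u i != 0%N]) => [i h|h].
  by exists i.
have h' : forall i, pos_part m u i = 0%N by move=> i; move: (h i) => /= /negbFE /eqP.
have := @hpos (- u) (LN _ Lu) (fun i => ltac:(rewrite ffunE; exact: pos_zero h' i)) => /eqP; rewrite oppr_eq0 => /eqP uz.
by rewrite uz eqxx in unz.
Qed.

Lemma neg_nz u : L u -> u != 0 -> exists i, neg_part m u i != 0%N.
Proof. by move=> Lu unz; rewrite -posN; apply: pos_nz (LN _ Lu) _; rewrite oppr_eq0. Qed.

Definition binom (u : {ffun 'I_m -> int}) : {mpoly K[m]} :=
  'X_[pos_part m u] - 'X_[neg_part m u].

Definition Pm (F : {set 'I_m}) (mm : 'X_{1..m}) : Prop :=
  exists v, L v /\ v != 0 /\ msupport m (pos_part m v) \subset F /\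
    (pos_part m v <= mm)%MM.

Lemma lepm_addl (m1 m2 : 'X_{1..m}) : (m2 <= m1 + m2)%MM.
Proof. by apply/mnm_lepP => i; rewrite mnmDE leq_addl. Qed.

Lemma G F g : I_L K m L g -> forall mm, mm \in msupp (psi F g) ->
  exists m1 m2, mm = (m1 + m2)%MM /\ Pm F m2.
Proof.
case=> r [hr ->] mm; rewrite /psi raddf_sum.
move/msupp_sum_le/flattenP => [s /mapP [p]]; rewrite mem_filter /= => pr ->.
rewrite rmorphM => /msuppM_le /allpairsP [[m1 m2] /= [_ h2 ->]].
exists m1, m2; split => //.
have [u [Lu e]] := hr p pr.
move: h2 => /psi_supp [h2 sF]; rewrite e in h2.
have [uz|unz] := eqVneq u 0.
  by move: h2; rewrite uz -pos0 subrr msupp0.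
move: h2 => /msuppB_le; rewrite mem_cat !msuppX !mem_seq1 => /orP [] /eqP e2; subst m2.
  by exists u; repeat split => //; apply: lepm_refl.
exists (- u); rewrite posN; repeat split => //; last by apply: lepm_refl.
  by apply: LN.
by rewrite oppr_eq0.
Qed.

Lemma lepm_trans' (a b c : 'X_{1..m}) : (a <= b)%MM -> (b <= c)%MM -> (a <= c)%MM.
Proof. by move=> h1 h2; apply: (lepm_trans h1 h2). Qed.

Lemma G' F g : I_L K m L g -> forall mm, mm \in msupp (psi F g) -> Pm F mm.
Proof.
move=> Ig mm /(G _ _ Ig) [m1 [m2 [-> [v [Lv [vnz [vF le]]]]]]].
exists v; do 3 split => //; apply: lepm_trans' le _; apply: lepm_addl.
Qed.

Lemma mdeg_le (a b : 'X_{1..m}) : (a <= b)%MM -> (mdeg a <= mdeg b)%N.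
Proof. by move/mnm_lepP => h; rewrite !mdegE; apply: leq_sum => i _. Qed.

Lemma neg_pos_disj (u : {ffun 'I_m -> int}) i :
  neg_part m u i != 0%N -> pos_part m u i = 0%N.
Proof.
rewrite posE negE; case: ifP => // h _.
by rewrite ltNge (ltW h).
Qed.

Definition Min (F : {set 'I_m}) : Prop := forall v, L v -> v != 0 ->
  msupport m (pos_part m v) \subset F -> msupport m (pos_part m v) = F.

Lemma I_L_mem (S : {mpoly K[m]} -> Prop) f : S f -> ideal_gen K m S f.
Proof.
move=> Sf; exists [:: (f, 1)]; split; last by rewrite big_seq1 mul1r.
by move=> p; rewrite mem_seq1 => /eqP ->.
Qed.

Lemma psi_binom F w : L w -> w != 0 -> msupport m (pos_part m w) = F ->
  psi F (binom w) = 'X_[pos_part m w].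
Proof.
move=> Lw wnz wF.
have -> : psi F (binom w) = psi F 'X_[pos_part m w] - psi F 'X_[neg_part m w].
  by rewrite /binom /psi raddfB.
rewrite !psiX wF subxx.
have [i hi] := neg_nz _ Lw wnz.
have -> : msupport m (neg_part m w) \subset F = false.
  apply/negbTE/subsetPn; exists i; first by rewrite inE.
  by rewrite -wF inE negbK (neg_pos_disj _ _ hi).
by rewrite subr0.
Qed.

Lemma indisp F w : Min F -> L w -> w != 0 ->
  msupport m (pos_part m w) \subset F ->
  (forall v, L v -> v != 0 -> msupport m (pos_part m v) \subset F ->
     (mdeg (pos_part m w) <= mdeg (pos_part m v))%N) ->
  indispensable K m L (pos_part m w).
Proof.
move=> hmin Lw wnz wF wmin S [_ hS].
have : ideal_gen K m S (binom w).
  by apply/hS/I_L_mem; exists w.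
case=> r [hr e].
have : pos_part m w \in msupp (psi F (binom w)).
  by rewrite (@psi_binom F w Lw wnz (hmin _ Lw wnz wF)) msuppX mem_seq1.
rewrite e /psi raddf_sum => /msupp_sum_le/flattenP [s /mapP [p]].
rewrite mem_filter /= => pr ->.
rewrite rmorphM => /msuppM_le /allpairsP [[m1 m2] /= [_ h2 em]].
exists p.1; split; first by apply: hr.
have Ip : I_L K m L p.1 by apply/hS/I_L_mem/hr.
have [v [Lv [vnz [vF le]]]] := G' _ _ Ip _ h2.
have h1 := wmin _ Lv vnz vF.
have h3 := mdeg_le _ _ le.
have : mdeg (pos_part m w) = (mdeg m1 + mdeg m2)%N by rewrite em mdegD.
move=> hd.
have : mdeg m1 == 0%N by move: h1 h3; rewrite hd; lia.
rewrite mdeg_eq0 => /eqP m10; rewrite em m10 add0m.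
by have [] := psi_supp _ _ _ h2.
Qed.

Lemma ex_min (P : nat -> Prop) : (exists n, P n) ->
  exists n, P n /\ forall k, P k -> (n <= k)%N.
Proof.
case=> n; elim/ltn_ind: n => n IH Pn.
case: (classic (exists k, P k /\ (k < n)%N)) => [[k [Pk lt]]|h].
  exact: IH lt Pk.
exists n; split=> // k Pk; rewrite leqNgt; apply/negP => lt; apply: h.
by exists k.
Qed.

Lemma min_exists v : L v -> v != 0 -> exists F w, Min F /\
  F \subset msupport m (pos_part m v) /\ L w /\ w != 0 /\
  msupport m (pos_part m w) = F /\
  (forall v', L v' -> v' != 0 -> msupport m (pos_part m v') \subset F ->
     (mdeg (pos_part m w) <= mdeg (pos_part m v'))%N).
Proof.
move=> Lv vnz.
have [k0 [[u [Lu [unz [uv ck]]]] kmin]] := @ex_min (fun k => exists u, L u /\ u != 0 /\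
   msupport m (pos_part m u) \subset msupport m (pos_part m v) /\
   #|msupport m (pos_part m u)| = k)
   (ex_intro _ _ (ex_intro _ v (conj Lv (conj vnz (conj (subxx _) erefl))))).
set F := msupport m (pos_part m u).
have hmin : Min F.
  move=> v' Lv' v'nz sub; apply/eqP; rewrite eqEcard sub /= ck.
  apply: kmin; exists v'; do 3 split => //.
  exact: subset_trans sub uv.
have [k1 [[w [Lw [wnz [wF cw]]]] kmin1]] := @ex_min (fun k => exists w, L w /\ w != 0 /\
   msupport m (pos_part m w) \subset F /\ mdeg (pos_part m w) = k)
   (ex_intro _ _ (ex_intro _ u (conj Lu (conj unz (conj (subxx _) erefl))))).
exists F, w; do 5 split => //; first exact: hmin.
move=> v' Lv' v'nz sub; rewrite cw; apply: kmin1; exists v'; by repeat split.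
Qed.

Lemma Tmin_Min E : Tmin K m L E -> Min E.
Proof.
move=> [[M [iM sM]] hnot] v Lv vnz sub; apply/eqP.
case: (eqVneq (msupport m (pos_part m v)) E) => // ne; exfalso.
have [F [w [hmin [Fv [Lw [wnz [wF wmin]]]]]]] := min_exists _ Lv vnz.
apply: hnot; exists (pos_part m w); split.
  by apply: (@indisp F w hmin Lw wnz _ wmin); rewrite wF.
rewrite wF; apply: sub_proper_trans Fv _.
by rewrite properEneq ne sub.
Qed.

Lemma Tmin_w E : Tmin K m L E -> exists w, L w /\ w != 0 /\
  msupport m (pos_part m w) = E.
Proof.
move=> [[M [iM sM]] _].
pose S (f : {mpoly K[m]}) := exists u, L u /\ u != 0 /\ f = binom u.
have gS : binomial_gen_system K m L S.
  split.
    move=> f [u [Lu [unz ->]]]; exists (pos_part m u), (neg_part m u); split => //.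
    have [i hi] := pos_nz _ Lu unz; apply/eqP => e.
    by have := pos_neg_disj _ _ hi; rewrite -e => h; rewrite h in hi.
  move=> f; split.
    case=> r [hr e]; exists r; split => // p /hr [u [Lu [_ ->]]]; by exists u.
  case=> r [hr e]; exists [seq p <- r | p.1 != 0]; split.
    move=> p; rewrite mem_filter => /andP [nz pr]; have [u [Lu ep]] := hr p pr.
    exists u; split => //; split => //.
    apply: contraNneq nz => uz; by rewrite ep uz -pos0 subrr.
  rewrite e big_filter (bigID (fun p => p.1 != 0)) /= [X in _ + X]big1 ?addr0 //.
  by move=> p /negbNE /eqP ->; rewrite mulr0.
have [f [[u [Lu [unz ef]]] Mf]] := iM S gS.
move: Mf; rewrite ef => /msuppB_le; rewrite mem_cat !msuppX !mem_seq1.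
case/orP => /eqP eM; subst M.
  by exists u.
exists (- u); rewrite posN; split; first exact: LN.
by rewrite oppr_eq0.
Qed.
End Helpers.


Definition pb (P : Prop) : bool := if excluded_middle_informative P then true else false.
Lemma pbP (P : Prop) : pb P <-> P.
Proof. by rewrite /pb; case: excluded_middle_informative. Qed.

Lemma simplex_part (K : fieldType) (m n : nat)
  (L : {ffun 'I_m -> int} -> Prop) (A : 'I_m -> 'I_n -> int) (Fi : {mpoly K[m]}) :
  A_homogeneous K m n A Fi -> is_simplex_of K m n L A (GammaF_face K m n L A Fi).
Proof.
move=> hhom.
pose sigma := [set E : {set 'I_m} | pb (vertex_of_poly K m L Fi E)].
pose Mf (E : {set 'I_m}) := nth 0%MM (msupp Fi)
   (find (fun M => msupport m M == E) (msupp Fi)).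
pose d := Adeg m n A (head 0%MM (msupp Fi)).
have hMf : forall E, vertex_of_poly K m L Fi E ->
    msupport m (Mf E) = E /\ Adeg m n A (Mf E) = d.
  move=> E [_ [M [MF sM]]].
  have hh : has (fun M => msupport m M == E) (msupp Fi).
    by apply/hasP; exists M => //; rewrite sM.
  have inF : Mf E \in msupp Fi by rewrite /Mf mem_nth // -has_find.
  split; first by apply/eqP; exact: (nth_find 0%MM hh).
  apply: hhom => //; move: inF; rewrite /d; case: (msupp Fi) => //= a s _.
  exact: mem_head.
have face : forall tau : {set {set 'I_m}}, (forall E, E \in tau -> vertex_of_poly K m L Fi E) ->
    Gamma_face K m n L A tau.
  move=> tau hv; split; first by move=> E /hv [].
  by exists Mf, d => E /hv /hMf.
exists sigma; split.
  by apply: face => E; rewrite inE => /pbP.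
move=> tau; split.
  by case=> _ hv; apply/subsetP => E /hv hE; rewrite inE; apply/pbP.
move=> sub.
have hv : forall E, E \in tau -> vertex_of_poly K m L Fi E.
  by move=> E /(subsetP sub); rewrite inE => /pbP.
by split => //; apply: face.
Qed.

Theorem corollary2p11 (K : fieldType) (m n : nat)
  (L : {ffun 'I_m -> int} -> Prop) (A : 'I_m -> 'I_n -> int)
  (s : nat) (F : 'I_s -> {mpoly K[m]}) :
  is_lattice m L ->
  (exists u, L u /\ u != 0) ->
  (forall u, L u -> (forall i, 0 <= u i) -> u = 0) ->
  (forall q : {ffun 'I_m -> int},
     (exists d : int, d != 0 /\ L [ffun i => d * q i]) <->
     (forall j, \sum_(i < m) q i * A i j = 0)) ->
  (forall i, A_homogeneous K m n A (F i)) ->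
  (forall i, I_L K m L (F i)) ->
  (forall f, radical K m (I_L K m L) f <->
             radical K m (ideal_gen K m (fun g => exists i, g = F i)) f) ->
  spanning_subcomplex K m n L A (fun sigma => exists i, GammaF_face K m n L A (F i) sigma) /\
  (forall i, is_simplex_of K m n L A (GammaF_face K m n L A (F i))).
Proof.
move=> hlat _ hpos _ hhom hFI hrad.
split; last by move=> i; apply: simplex_part.
split; first by move=> sigma [i [hG _]].
move=> E hE.
have TE : Tmin K m L E by apply: hE.1; rewrite in_set1.
case: (classic (exists i M, M \in msupp (F i) /\ msupport m M = E)) =>
   [[i [M [MF sME]]] | hno].
  exists i; split => // E'; rewrite in_set1 => /eqP ->; split => //.
  by exists M.
exfalso.
have hmin := @Tmin_Min K m L hlat hpos E TE.
have [w [Lw [wnz wE]]] := @Tmin_w K m L hlat hpos E TE.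
have hz : forall i, psi K m E (F i) = 0.
  move=> i; apply/msuppnil0; case e: (msupp (psi K m E (F i))) => [|mm l] //.
  exfalso.
  have hmm : mm \in msupp (psi K m E (F i)) by rewrite e mem_head.
  have [hmF sub] := @psi_supp K m E (F i) mm hmm.
  have [v [Lv [vnz [vF le]]]] := @G' K m L hlat E (F i) (hFI i) mm hmm.
  apply: hno; exists i, mm; split => //; apply/eqP; rewrite eqEsubset sub /=.
  rewrite -(hmin v Lv vnz vF); apply/subsetP => j; rewrite !inE.
  move/mnm_lepP: le => le; apply: contraNneq => e0.
  by move: (le j); rewrite e0 leqn0.
have : radical K m (I_L K m L) (binom K m w).
  by exists 1%N; rewrite expr1; apply: I_L_mem; exists w.
case/hrad => k [r [hr e]].
have h0 : psi K m E (binom K m w ^+ k) = 0.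
  rewrite e psi_sum big_seq big1 // => p pr; rewrite psiM.
  by have [i ->] := hr p pr; rewrite hz mulr0.
move: h0; rewrite psiXn.
rewrite (@psi_binom K m L hlat hpos E w Lw wnz wE) mpolyXn => /(congr1 (@msupp m K)).
by rewrite msuppX msupp0.
Qed.
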